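(* Let $R>0$, $d\ge1$, $\Lambda^d_R=\{x\in\mathbb{R}^d:\|x\|_2\le R\}$, and let $X=\{x^{(1)},\dots,x^{(n)}\}\subset\Lambda^d_R$. Let $w\in\mathbb{R}^n$ with $\left(\sum_{i=1}^n|w_i|\right)^2\le\xi$, and let $\alpha>0$. Then for every positive integer $s$, \[ w^T\left(K_X-K^{\mathsf{HD}}_{X,s}\right)w\le\left(\sum_{i=1}^n|w_i|\right)^2\exp(2R^2)\left(\frac{2eR^2}{s}\right)^s, \] and moreover this quantity is at most $\alpha$ when $s=\Theta\!\left(\frac{\log\frac{\xi\exp(2R^2)}{\alpha}}{\log\left(\frac{1}{2eR^2}\log\frac{\xi\exp(2R^2)}{\alpha}\right)}\right)$ (with a sufficiently large constant).
   Context: $K_X$ is the $n\times n$ matrix with $(K_X)_{i,j}=\exp(-\|x^{(i)}-x^{(j)}\|^2)$. For a positive integer $s$, $K^{\mathsf{HD}}_{X,s}$ is the $n\times n$ matrix with \[ (K^{\mathsf{HD}}_{X,s})_{i,j}=\sum_{a=0}^{s-1}\left\langle e^{-\|x^{(i)}\|^2}\sqrt{\tfrac{2^a}{a!}}(x^{(i)})^{\otimes a},\ e^{-\|x^{(j)}\|^2}\sqrt{\tfrac{2^a}{a!}}(x^{(j)})^{\otimes a}\right\rangle, \] where $x^{\otimes 0}=1$, $x^{\otimes a}=x\otimes x^{\otimes(a-1)}\in\mathbb{R}^{d^a}$ (Kronecker product) and $\langle\cdot,\cdot\rangle$ is the standard inner product. *)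

(* Defs.v *)
From HB Require Import structures.
From mathcomp Require Import all_boot all_order all_algebra.
From mathcomp Require Import all_classical all_reals all_analysis.
Set Implicit Arguments. Unset Strict Implicit. Unset Printing Implicit Defensive.
Import Order.TTheory GRing.Theory Num.Theory.
Local Open Scope ring_scope.

Section Defs.
Variable R : realType.

Definition sqnorm (d : nat) (x : 'rV[R]_d) : R := \sum_(k < d) (x 0 k) ^+ 2.

Definition enorm (d : nat) (x : 'rV[R]_d) : R := Num.sqrt (sqnorm x).

Definition Lambda (d : nat) (Rad : R) : set 'rV[R]_d :=
  [set x | enorm x <= Rad].

Definition KX (d n : nat) (X : 'I_n -> 'rV[R]_d) : 'M[R]_n :=
  \matrix_(i < n, j < n) expR (- sqnorm (X i - X j)).

(* The a-fold tensor power x^{(x)a} in R^{d^a}; coordinates are indexed by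
   multi-indices (i_1,...,i_a) : {ffun 'I_a -> 'I_d} (a reindexing of the
   Kronecker-product coordinates, which does not change inner products). *)
Definition tpow (d a : nat) (x : 'rV[R]_d) : {ffun 'I_a -> 'I_d} -> R :=
  fun idx => \prod_(k < a) x 0 (idx k).

Definition tinner (d a : nat) (u v : {ffun 'I_a -> 'I_d} -> R) : R :=
  \sum_(idx : {ffun 'I_a -> 'I_d}) u idx * v idx.

Definition feat (d a : nat) (x : 'rV[R]_d) : {ffun 'I_a -> 'I_d} -> R :=
  fun idx => expR (- sqnorm x) * Num.sqrt (2 ^+ a / (a`!)%:R) * @tpow d a x idx.

Definition KHD (d n : nat) (X : 'I_n -> 'rV[R]_d) (s : nat) : 'M[R]_n :=
  \matrix_(i < n, j < n)
     \sum_(a < s) tinner (@feat d a (X i)) (@feat d a (X j)).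

Definition qform (n : nat) (w : 'cV[R]_n) (M : 'M[R]_n) : R :=
  ((w^T *m M *m w) 0 0).

Definition l1 (n : nat) (w : 'cV[R]_n) : R := \sum_(i < n) `|w i 0|.

End Defs.

(* Main.v *)
Require Import Defs.
From HB Require Import structures.
From mathcomp Require Import all_boot all_order all_algebra.
From mathcomp Require Import all_classical all_reals all_analysis.
From mathcomp Require Import ring lra.
Import Order.TTheory GRing.Theory Num.Theory.
Local Open Scope ring_scope.

Section S.
Variable R : realType.

Lemma exp_partial_le (t : R) N : 0 <= t ->
  \sum_(0 <= a < N) t ^+ a / a`!%:R <= expR t.
Proof.
move=> t0.
have := @nondecreasing_cvgn_le _ (series (exp_coeff t)) _ (is_cvg_series_exp_coeff t) N.
apply.
apply: (@nondecreasing_series _ _ predT 0) => n _ _.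
exact: exp_coeff_ge0.
Qed.

Lemma fact_mul_le s k : (s`! * k`! <= (s + k)`!)%N.
Proof.
have := bin_fact (leq_addr k s); rewrite addKn => <-.
by rewrite leq_pmull // bin_gt0 leq_addr.
Qed.

Lemma tail_bound (t : R) s N :
  `|\sum_(s <= a < N) t ^+ a / a`!%:R| <= expR `|t| * (`|t| ^+ s / s`!%:R).
Proof.
apply: (le_trans (ler_norm_sum _ _ _)).
case: (leqP N s) => [NS|SN].
  rewrite big_geq // mulr_ge0 // ?expR_ge0 // divr_ge0 // exprn_ge0 //.
rewrite -{1}(add0n s) big_addn.
under eq_bigr => i _ do rewrite normrM normrX normfV normr_nat.
rewrite mulrC.
have c0 : 0 <= `|t| ^+ s / s`!%:R by rewrite divr_ge0 // exprn_ge0.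
have := ler_wpM2l c0 (exp_partial_le _ (N - s)%N (normr_ge0 t)).
apply: le_trans.
rewrite big_distrr /= big_nat [X in _ <= X]big_nat; apply: ler_sum => i /andP[_ hi].
rewrite addnC exprD mulrACA -invfM ler_wpM2l ?mulr_ge0 ?exprn_ge0 //.
rewrite lef_pV2 ?posrE ?ltr0n ?mulr_gt0 ?fact_gt0 // -natrM ler_nat.
exact: fact_mul_le.
Qed.


Lemma exp_tail (t : R) s :
  `|expR t - \sum_(0 <= a < s) t ^+ a / a`!%:R| <= expR `|t| * (`|t| ^+ s / s`!%:R).
Proof.
set S := \sum_(0 <= a < s) _.
set B := expR `|t| * _.
have key : \forall N \near \oo%classic, `|series (exp_coeff t) N - S| <= B.
  near=> N.
  have sN : (s <= N)%N by near: N; exists s.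
  rewrite /series /= (@big_cat_nat _ _ _ s 0 N _ _ (leq0n s) sN) /= addrC addrK.
  exact: tail_bound.
have cv := is_cvg_series_exp_coeff t.
have h1 : S - B <= expR t.
  apply: limr_ge => //.
  by apply: filterS key => N /ler_normlP [H1 H2]; lra.
have h2 : expR t <= S + B.
  apply: limr_le => //.
  by apply: filterS key => N /ler_normlP [H1 H2]; lra.
apply/ler_normlP; split; lra.
Unshelve. all: by end_near.
Qed.


Definition ip {d} (x y : 'rV[R]_d) : R := \sum_(k < d) x 0 k * y 0 k.

Lemma tinner_tpow d a (x y : 'rV[R]_d) :
  tinner (@tpow R d a x) (@tpow R d a y) = ip x y ^+ a.
Proof.
rewrite /tinner /tpow /ip.
under eq_bigr => idx _ do rewrite -big_split /=.
rewrite -(bigA_distr_bigA (fun (k : 'I_a) (j : 'I_d) => x 0 j * y 0 j)) /=.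
by rewrite prodr_const card_ord.
Qed.

Lemma sqnorm_ge0 d (x : 'rV[R]_d) : 0 <= sqnorm x.
Proof. by apply: sumr_ge0 => k _; rewrite sqr_ge0. Qed.

Lemma tinner_feat d a (x y : 'rV[R]_d) :
  tinner (@feat R d a x) (@feat R d a y) =
  expR (- sqnorm x) * expR (- sqnorm y) * ((2 * ip x y) ^+ a / a`!%:R).
Proof.
have -> : tinner (@feat R d a x) (@feat R d a y) =
   expR (- sqnorm x) * expR (- sqnorm y) * (Num.sqrt (2 ^+ a / (a`!)%:R)) ^+ 2 *
   tinner (@tpow R d a x) (@tpow R d a y).
  rewrite /tinner /feat mulr_sumr; apply: eq_bigr => idx _; ring.
rewrite tinner_tpow sqr_sqrtr ?divr_ge0 ?exprn_ge0 // exprMn; ring.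
Qed.

Lemma sqnormB d (x y : 'rV[R]_d) :
  sqnorm (x - y) = sqnorm x + sqnorm y - 2 * ip x y.
Proof.
rewrite /sqnorm /ip mulr_sumr -big_split -sumrB /=; apply: eq_bigr => k _.
rewrite !mxE; ring.
Qed.

Lemma ip_bound d (x y : 'rV[R]_d) : `|2 * ip x y| <= sqnorm x + sqnorm y.
Proof.
rewrite /ip /sqnorm mulr_sumr -big_split /=.
apply: (le_trans (ler_norm_sum _ _ _)); apply: ler_sum => k _.
have h1 := sqr_ge0 (x 0 k + y 0 k); have h2 := sqr_ge0 (x 0 k - y 0 k).
apply/ler_normlP; split; nra.
Qed.

Lemma ss_fact (s : nat) : (s%:R : R) ^+ s / s`!%:R <= expR 1 ^+ s.
Proof.
rewrite -expRM_natl mulr1.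
have := exp_partial_le (s%:R : R) s.+1 (ler0n _ _).
rewrite big_nat_recr //=; apply: le_trans.
rewrite lerDr; apply: sumr_ge0 => i _; rewrite divr_ge0 ?exprn_ge0 //.
Qed.

Lemma D_entry d n (X : 'I_n -> 'rV[R]_d) s i j :
  (KX X - KHD X s) i j = expR (- sqnorm (X i)) * expR (- sqnorm (X j)) *
    (expR (2 * ip (X i) (X j)) - \sum_(0 <= a < s) (2 * ip (X i) (X j)) ^+ a / a`!%:R).
Proof.
rewrite !mxE sqnormB.
under eq_bigr => a _ do rewrite tinner_feat.
rewrite -mulr_sumr big_mkord.
have -> : - (sqnorm (X i) + sqnorm (X j) - 2 * ip (X i) (X j)) =
  - sqnorm (X i) + - sqnorm (X j) + 2 * ip (X i) (X j) by ring.
rewrite !expRD; ring.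
Qed.

Lemma T_fact (T : R) s : 0 <= T -> (0 < s)%N ->
  T ^+ s / s`!%:R <= (expR 1 * T / s%:R) ^+ s.
Proof.
move=> T0 s0.
have sp : 0 < (s%:R : R) ^+ s by rewrite exprn_gt0 // ltr0n.
have fp : 0 < (s`!%:R : R) by rewrite ltr0n fact_gt0.
have -> : (expR 1 * T / s%:R) ^+ s = T ^+ s * (expR 1 ^+ s / s%:R ^+ s).
  by rewrite !exprMn exprVn; ring.
apply: ler_wpM2l; first by rewrite exprn_ge0.
rewrite ler_pdivlMr // mulrC; exact: ss_fact.
Qed.

Lemma entry_bound d n (X : 'I_n -> 'rV[R]_d) s i j (Rad : R) :
  sqnorm (X i) <= Rad ^+ 2 -> sqnorm (X j) <= Rad ^+ 2 -> (0 < s)%N ->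
  `|(KX X - KHD X s) i j| <= expR (2 * Rad ^+ 2) * (2 * expR 1 * Rad ^+ 2 / s%:R) ^+ s.
Proof.
move=> hi hj s0.
rewrite D_entry normrM.
set t := 2 * ip (X i) (X j).
set T := 2 * Rad ^+ 2.
have tT : `|t| <= T.
  have := ip_bound _ (X i) (X j); rewrite -/t /T; lra.
have E1 : `|expR (- sqnorm (X i)) * expR (- sqnorm (X j))| <= 1.
  rewrite ger0_norm ?mulr_ge0 ?expR_ge0 //.
  rewrite -expRD expR_le1; have := sqnorm_ge0 _ (X i); have := sqnorm_ge0 _ (X j); lra.
rewrite -[X in _ <= X]mul1r.
apply: ler_pM => //.
have -> : 2 * expR 1 * Rad ^+ 2 = expR 1 * T by rewrite /T; ring.
apply: (le_trans (exp_tail _ _)).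
apply: ler_pM; rewrite ?expR_ge0 ?divr_ge0 ?exprn_ge0 //.
  by rewrite ler_expR.
have T0 : 0 <= T by apply: le_trans tT.
have := T_fact _ _ T0 s0; apply: le_trans.
rewrite ler_wpM2r // ?invr_ge0 // lerXn2r // nnegrE //.
Qed.

Lemma qform_bound n (w : 'cV[R]_n) (M : 'M[R]_n) B :
  (forall i j, `|M i j| <= B) -> qform w M <= l1 w ^+ 2 * B.
Proof.
move=> hB; rewrite /qform /l1 mxE.
under eq_bigr => j _ do rewrite mxE.
apply: (le_trans (ler_norm _)); apply: (le_trans (ler_norm_sum _ _ _)).
have -> : (\sum_(i < n) `|w i 0|) ^+ 2 * B =
   \sum_(j < n) ((\sum_(i < n) `|w i 0| * B) * `|w j 0|).
  by rewrite -mulr_suml -mulr_sumr; ring.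
apply: ler_sum => j _; rewrite normrM; apply: ler_wpM2r => //.
apply: (le_trans (ler_norm_sum _ _ _)); apply: ler_sum => i _.
rewrite !mxE normrM; apply: ler_wpM2l => //.
Qed.

Lemma ln_half (y : R) : 0 < y -> ln y <= y / 2.
Proof.
move=> y0.
have l2 : ln (2 : R) <= 1 by have := @le_ln1Dx R 1; rewrite (_ : 1 + 1 = 2 :> R) //; apply; lra.
have -> : y = (1 + (y / 2 - 1)) * 2 by field.
rewrite lnM ?posrE; [|lra|lra].
have := @le_ln1Dx R (y / 2 - 1); rewrite (_ : 1 + (y / 2 - 1) = y / 2); last by ring.
move=> h; have := h ltac:(lra).
lra.
Qed.

Lemma part2 (Rad xi alpha lw : R) (s : nat) : 0 < Rad -> lw ^+ 2 <= xi -> 0 < alpha ->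
  let L := ln (xi * expR (2 * Rad ^+ 2) / alpha) in
  1 < L / (2 * expR 1 * Rad ^+ 2) ->
  2 * (L / ln (L / (2 * expR 1 * Rad ^+ 2))) <= s%:R ->
  lw ^+ 2 * expR (2 * Rad ^+ 2) * (2 * expR 1 * Rad ^+ 2 / s%:R) ^+ s <= alpha.
Proof.
move=> R0 hxi a0 L hu hs.
set b := 2 * expR 1 * Rad ^+ 2.
set T := 2 * Rad ^+ 2.
have b0 : 0 < b by rewrite /b !mulr_gt0 ?expR_gt0 ?exprn_gt0.
have eT : 0 < expR T by apply: expR_gt0.
have lw0 : 0 <= lw ^+ 2 by apply: sqr_ge0.
have [xi0|xipos] := eqVneq xi 0.
  have -> : lw ^+ 2 = 0 by apply/eqP; rewrite eq_le lw0 andbT -xi0.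
  by rewrite !mul0r ltW.
have xp : 0 < xi by rewrite lt_def xipos (le_trans lw0 hxi).
set x := xi * expR T / alpha.
have x0 : 0 < x by rewrite /x divr_gt0 ?mulr_gt0.
have eL : expR L = x by rewrite /L lnK.
set u := L / b.
set y := ln u.
have y0 : 0 < y by apply: ln_gt0.
have u0 : 0 < u by apply: lt_trans hu.
set r := s%:R / b.
have hr0 : 2 * u / y <= r.
  rewrite /r ler_pdivlMr //.
  have -> : 2 * u / y * b = 2 * (L / y).
    by rewrite /u; field; rewrite !gt_eqF.
  exact: hs.
have r00 : 0 < 2 * u / y by apply: divr_gt0 => //; apply: mulr_gt0.
have r0 : 0 < r by apply: lt_le_trans hr0.
have hlr : y / 2 <= ln r.
  have : ln (2 * u / y) <= ln r by rewrite ler_ln ?posrE.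
  apply: le_trans.
  have p2 : (2 : R) \in Num.pos by rewrite posrE; lra.
  have pu : u \in Num.pos by rewrite posrE.
  have py : y^-1 \in Num.pos by rewrite posrE invr_gt0.
  have p2u : 2 * u \in Num.pos by rewrite posrE mulr_gt0.
  rewrite (lnM p2u py) (lnM p2 pu) lnV; last by rewrite posrE.
  have := ln_half y y0; have : 0 <= ln (2 : R) by apply: ln_ge0; lra.
  rewrite -/y; lra.
have hrl : u <= r * ln r.
  have -> : u = 2 * u / y * (y / 2) by field; rewrite gt_eqF.
  by apply: ler_pM => //; [apply: ltW|lra].
have hsL : L <= s%:R * ln r.
  have -> : s%:R = b * r by rewrite /r; field; rewrite gt_eqF.
  have -> : L = b * u by rewrite /u; field; rewrite gt_eqF.
  by rewrite -mulrA ler_wpM2l // ltW.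
have hpow : (b / s%:R) ^+ s = expR (- (s%:R * ln r)).
  have -> : b / s%:R = r ^-1.
    rewrite /r invf_div //.
  rewrite -[LHS]lnK ?posrE ?exprn_gt0 ?invr_gt0 //.
  by rewrite lnXn ?invr_gt0 // lnV ?posrE // mulr_natl mulNrn.
rewrite hpow.
have hE : expR (- (s%:R * ln r)) <= x ^-1.
  by rewrite -eL -expRN ler_expR lerN2.
apply: (le_trans (y := xi * expR T * x^-1)); last first.
  have -> : xi * expR T * x^-1 = alpha.
    by rewrite /x; field; rewrite !gt_eqF.
  by [].
apply: ler_pM => //.
- by apply: mulr_ge0 => //; apply: ltW.
- by apply: ler_wpM2r => //; apply: ltW.

Qed.

End S.

Lemma sqnorm_le (R : realType) d (x : 'rV[R]_d) (Rad : R) :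
  Lambda Rad x -> sqnorm x <= Rad ^+ 2.
Proof.
rewrite /Lambda /enorm /= => h.
rewrite -(sqr_sqrtr (sqnorm_ge0 _ _ x)).
apply: lerXn2r => //; rewrite nnegrE //.
exact: le_trans h.
Qed.

Theorem lemma2p7 (R : realType) :
  exists C : R, 0 < C /\
  forall (Rad : R) (d n : nat) (X : 'I_n -> 'rV[R]_d) (w : 'cV[R]_n) (xi alpha : R),
    0 < Rad -> (0 < d)%N ->
    (forall i, @Lambda R d Rad (X i)) ->
    (l1 w) ^+ 2 <= xi -> 0 < alpha ->
    (forall s : nat, (0 < s)%N ->
       qform w (KX X - KHD X s)
       <= (l1 w) ^+ 2 * expR (2 * Rad ^+ 2) * (2 * expR 1 * Rad ^+ 2 / s%:R) ^+ s)
    /\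
    (let L := ln (xi * expR (2 * Rad ^+ 2) / alpha) in
     1 < L / (2 * expR 1 * Rad ^+ 2) ->
     forall s : nat, C * (L / ln (L / (2 * expR 1 * Rad ^+ 2))) <= s%:R ->
       (l1 w) ^+ 2 * expR (2 * Rad ^+ 2) * (2 * expR 1 * Rad ^+ 2 / s%:R) ^+ s
       <= alpha).
Proof.
exists 2; split; first lra.
move=> Rad d n X w xi alpha R0 d0 hX hxi a0; split.
- move=> s s0; rewrite -mulrA; apply: qform_bound => i j.
  by apply: entry_bound => //; apply: sqnorm_le.
- move=> L hu s hs; exact: (@part2 R Rad xi alpha (l1 w) s R0 hxi a0 hu hs).
Qed.
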